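(* Assume $J$ satisfies (J1), (J2), (J3), (J4) and $h$ satisfies (h1), (h2). Let $u$ be a minimizer for $H$ in $Q_\ell(q)$, for some $q\in\mathbb Z^d$ and $\ell\in\mathbb N$. Then $$H_{Q_\ell(q)}(u)\le\bar C\,\ell^{d-1}\Big(1+\sum_{m=1}^{\ell}\sigma(m)\Big),$$ for a constant $\bar C\ge1$ depending only on $d$, $\mu$ and $\tau$. Moreover, if $h$ vanishes in $Q_\ell(q)$, $\bar C$ may be chosen depending only on $d$.
   Context: Fix $d\ge2$, $|x|:=\sum_n|x_n|$, $|x|_\infty:=\max_n|x_n|$. Configurations are maps $u:\mathbb Z^d\to\{-1,1\}$. Given $J:\mathbb Z^d\times\mathbb Z^d\to[0,\infty)$ and $h:\mathbb Z^d\to\mathbb R$, for finite $\Gamma$: $H_\Gamma(u):=\sum_{(i,j)\in\mathbb Z^{2d}\setminus(\mathbb Z^d\setminus\Gamma)^2}J_{ij}(1-u_iu_j)+\sum_{i\in\Gamma}h_iu_i$; $u$ is a minimizer for $H$ in $\Gamma$ if $H_\Gamma(u)\le H_\Gamma(v)$ for all configurations $v$ agreeing with $u$ outside $\Gamma$. $Q_\ell(q):=\{i\in\mathbb Z^d:|i-q|_\infty\le\ell\}$. Conditions (constants $\Lambda\ge\lambda>0$, $\mu>0$, $\tau\in\mathbb N$): (J1) $J_{ij}=J_{ji}$; (J2) $J_{ii}=0$; (J3) $J_{ij}\ge\lambda$ if $|i-j|=1$; (J4) $\sum_jJ_{ij}\le\Lambda$ for all $i$; (h1) $\sup_i|h_i|\le\mu$;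 (h2) $\sum_{i\in F}h_i=0$ for every fundamental domain $F$ (set of representatives) of $\mathbb Z^d/\tau\mathbb Z^d$. For $R\in\mathbb N$, $\sigma(R):=\sup_{i\in\mathbb Z^d}\sum_{j:\,|j-i|_\infty\ge R}J_{ij}$. *)

(* Defs.v *)
From Stdlib Require Import Reals ZArith List.
Import ListNotations.
Open Scope R_scope.

(* Points of Z^d are lists of integers of length d. *)
Definition site (d : nat) (x : list Z) : Prop := length x = d.

Definition vsub (x y : list Z) : list Z :=
  map (fun p => (fst p - snd p)%Z) (combine x y).

Definition norm1 (x : list Z) : Z :=
  fold_right (fun a s => (Z.abs a + s)%Z) 0%Z x.

Definition normInf (x : list Z) : Z :=
  fold_right (fun a s => Z.max (Z.abs a) s) 0%Z x.

Definition cube (d : nat) (l : nat) (q : list Z) (i : list Z) : Prop :=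
  site d i /\ (normInf (vsub i q) <= Z.of_nat l)%Z.

Definition lsum (l : list R) : R := fold_right Rplus 0 l.

(* Unordered sum of a nonnegative family indexed by {x | P x}:
   L is the least upper bound of all finite partial sums
   (over duplicate-free finite lists of indices satisfying P). *)
Definition has_nnsum {T : Type} (P : T -> Prop) (f : T -> R) (L : R) : Prop :=
  is_lub (fun s => exists l : list T,
            NoDup l /\ Forall P l /\ s = lsum (map f l)) L.

(* Sum over a finite set {x | P x}: L is the sum over some duplicate-free
   enumeration of that set (independent of the enumeration). *)
Definition finsum {T : Type} (P : T -> Prop) (f : T -> R) (L : R) : Prop :=
  exists l : list T, NoDup l /\ (forall x, In x l <-> P x) /\ L = lsum (map f l).

Definition config (d : nat) (u : list Z -> R) : Prop :=
  forall i, site d i -> u i = 1 \/ u i = -1.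

(* H_Gamma(u) = L, where the pair sum runs over
   Z^{2d} \ (Z^d \ Gamma)^2 = pairs (i,j) with i in Gamma or j in Gamma. *)
Definition Hval (d : nat) (J : list Z -> list Z -> R) (h : list Z -> R)
    (Gamma : list Z -> Prop) (u : list Z -> R) (L : R) : Prop :=
  exists A B,
    has_nnsum (fun p : list Z * list Z =>
                 site d (fst p) /\ site d (snd p) /\ (Gamma (fst p) \/ Gamma (snd p)))
              (fun p => J (fst p) (snd p) * (1 - u (fst p) * u (snd p))) A /\
    finsum (fun i => site d i /\ Gamma i) (fun i => h i * u i) B /\
    L = A + B.

(* u is a minimizer for H in Gamma: H_Gamma(u) is finite and
   H_Gamma(u) <= H_Gamma(v) for every configuration v agreeing with u outside
   Gamma (when H_Gamma(v) = +infinity there is nothing to check). *)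
Definition minimizer (d : nat) (J : list Z -> list Z -> R) (h : list Z -> R)
    (Gamma : list Z -> Prop) (u : list Z -> R) : Prop :=
  config d u /\
  exists Lu, Hval d J h Gamma u Lu /\
  forall v, config d v ->
    (forall i, site d i -> ~ Gamma i -> v i = u i) ->
    forall Lv, Hval d J h Gamma v Lv -> Lu <= Lv.

Definition J_nonneg d (J : list Z -> list Z -> R) : Prop :=
  forall i j, site d i -> site d j -> 0 <= J i j.
Definition J1 d (J : list Z -> list Z -> R) : Prop :=
  forall i j, site d i -> site d j -> J i j = J j i.
Definition J2 d (J : list Z -> list Z -> R) : Prop :=
  forall i, site d i -> J i i = 0.
Definition J3 d (lambda : R) (J : list Z -> list Z -> R) : Prop :=
  forall i j, site d i -> site d j -> norm1 (vsub i j) = 1%Z -> lambda <= J i j.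
(* sum_j J_ij <= Lambda, i.e. every finite partial sum is <= Lambda *)
Definition J4 d (Lambda : R) (J : list Z -> list Z -> R) : Prop :=
  forall i, site d i -> forall l, NoDup l -> Forall (site d) l ->
    lsum (map (J i) l) <= Lambda.

Definition h1 d (mu : R) (h : list Z -> R) : Prop :=
  forall i, site d i -> Rabs (h i) <= mu.

Definition congr_mod (tau : nat) (i j : list Z) : Prop :=
  Forall2 (fun a b => Z.modulo a (Z.of_nat tau) = Z.modulo b (Z.of_nat tau)) i j.

Definition fund_domain (d tau : nat) (F : list Z -> Prop) : Prop :=
  (forall j, F j -> site d j) /\
  (forall i, site d i -> exists j, F j /\ congr_mod tau i j /\
     forall j', F j' -> congr_mod tau i j' -> j' = j).

Definition h2 d (tau : nat) (h : list Z -> R) : Prop :=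
  forall F, fund_domain d tau F -> finsum F h 0.

(* sigma(R) = sup_i sum_{j : |j - i|_inf >= R} J_ij  (value s) *)
Definition sigma_val d (J : list Z -> list Z -> R) (Rr : nat) (s : R) : Prop :=
  is_lub (fun x => exists i, site d i /\
            has_nnsum (fun j => site d j /\ (Z.of_nat Rr <= normInf (vsub j i))%Z)
                      (J i) x) s.

Definition rhs (C : R) (d l : nat) (sig : nat -> R) : R :=
  C * INR l ^ (d - 1) * (1 + lsum (map sig (seq 1 l))).

(* Main.v *)
Require Import Defs.
From Stdlib Require Import Reals ZArith List Lia Lra Permutation Bool.
Import ListNotations.
Open Scope R_scope.


Lemma lsum_app : forall a b, lsum (a ++ b) = lsum a + lsum b.
Proof. induction a; intros; simpl; [lra| rewrite IHa; lra]. Qed.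

Lemma lsum_perm : forall a b, Permutation a b -> lsum a = lsum b.
Proof. intros a b H; induction H; simpl; lra. Qed.

Lemma lsum_plus : forall {A} (f g : A -> R) L,
  lsum (map (fun x => f x + g x) L) = lsum (map f L) + lsum (map g L).
Proof. induction L; simpl; lra. Qed.

Lemma lsum_scal : forall {A} (f : A -> R) c L,
  lsum (map (fun x => c * f x) L) = c * lsum (map f L).
Proof. induction L; simpl; [lra| rewrite IHL; lra]. Qed.

Lemma lsum_const : forall {A} c (L : list A),
  lsum (map (fun _ => c) L) = c * INR (length L).
Proof. induction L; simpl length; [simpl; lra| rewrite S_INR; simpl; rewrite IHL; lra]. Qed.

Lemma lsum_le : forall {A} (f g : A -> R) L,
  (forall x, In x L -> f x <= g x) -> lsum (map f L) <= lsum (map g L).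
Proof. induction L; simpl; intros; [lra|].
  specialize (IHL (fun x Hx => H x (or_intror Hx))). specialize (H a (or_introl eq_refl)). lra. Qed.

Lemma lsum_nonneg : forall {A} (f : A -> R) L,
  (forall x, In x L -> 0 <= f x) -> 0 <= lsum (map f L).
Proof. induction L; simpl; intros; [lra|].
  specialize (IHL (fun x Hx => H x (or_intror Hx))). specialize (H a (or_introl eq_refl)). lra. Qed.

Lemma lsum_In : forall {A} (f : A -> R) L y,
  (forall x, In x L -> 0 <= f x) -> In y L -> f y <= lsum (map f L).
Proof. induction L; simpl; intros y Hn Hy; [tauto|].
  destruct Hy as [<-|Hy].
  - pose proof (lsum_nonneg f L (fun x Hx => Hn x (or_intror Hx))). lra.
  - specialize (IHL y (fun x Hx => Hn x (or_intror Hx)) Hy). specialize (Hn a (or_introl eq_refl)). lra. Qed.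

Lemma lsum_flat_map : forall {A B} (f : B -> R) (g : A -> list B) L,
  lsum (map f (flat_map g L)) = lsum (map (fun a => lsum (map f (g a))) L).
Proof. induction L; simpl; auto. rewrite map_app, lsum_app, IHL. reflexivity. Qed.

Lemma lsum_ext : forall {A} (f g : A -> R) L,
  (forall x, In x L -> f x = g x) -> lsum (map f L) = lsum (map g L).
Proof. intros. f_equal. apply map_ext_in. auto. Qed.

Lemma sum_seq_shift : forall n (f : nat -> R) s,
  lsum (map f (seq s n)) = lsum (map (fun k => f (s + k)%nat) (seq 0 n)).
Proof. induction n; intros; simpl; auto.
  rewrite IHn. rewrite (IHn (fun k => f (s + k)%nat) 1%nat). replace (s+0)%nat with s by lia.
  f_equal. apply lsum_ext. intros. f_equal. lia. Qed.

Lemma sum_seq_rev : forall (f : nat -> R) n,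
  lsum (map (fun k => f (n - k)%nat) (seq 0 n)) = lsum (map (fun k => f (k + 1)%nat) (seq 0 n)).
Proof. induction n.
  - reflexivity.
  - change (seq 0 (S n)) with (0%nat :: seq 1 n) at 1. simpl map at 1. simpl lsum at 1.
    rewrite (sum_seq_shift n _ 1%nat).
    rewrite (lsum_ext (fun k => f (S n - (1 + k))%nat) (fun k => f (n - k)%nat)) by (intros; f_equal; lia).
    rewrite IHn. rewrite seq_S, map_app, lsum_app. simpl.
    replace (S n) with (n + 1)%nat by lia. lra. Qed.

Lemma normInf_nonneg : forall v, (0 <= normInf v)%Z.
Proof. induction v; simpl; lia. Qed.

Lemma normInf_attained : forall v, v <> [] -> exists z, In z v /\ Z.abs z = normInf v.
Proof. induction v; intros H; [congruence|].
  destruct v as [|b v'].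
  - exists a. simpl. split; auto. lia.
  - destruct IHv as [z [Hz Hz']]; [congruence|].
    change (normInf (a :: b :: v')) with (Z.max (Z.abs a) (normInf (b :: v'))).
    destruct (Z.le_ge_cases (Z.abs a) (normInf (b::v'))).
    + exists z. split; [right; auto| lia].
    + exists a. split; [left; auto| lia]. Qed.

Lemma vsub_cons : forall a x b y, vsub (a :: x) (b :: y) = (a - b)%Z :: vsub x y.
Proof. reflexivity. Qed.

Lemma normInf_tri : forall a b c, length a = length b -> length b = length c ->
  (normInf (vsub a c) <= normInf (vsub a b) + normInf (vsub b c))%Z.
Proof. induction a as [|x a IHa]; intros [|y b] [|z c] H1 H2; simpl in H1, H2; try (simpl; lia).
  rewrite !vsub_cons. cbn [normInf fold_right]. fold (normInf (vsub a c)) (normInf (vsub a b)) (normInf (vsub b c)). specialize (IHa b c ltac:(lia) ltac:(lia)). lia. Qed.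

Lemma normInf_sym : forall a b, normInf (vsub a b) = normInf (vsub b a).
Proof. induction a as [|x a IHa]; intros [|y b]; try reflexivity. rewrite !vsub_cons. cbn [normInf fold_right]. fold (normInf (vsub a b)) (normInf (vsub b a)). rewrite IHa. lia. Qed.

Lemma vsub_length : forall a b, length (vsub a b) = Nat.min (length a) (length b).
Proof. intros. unfold vsub. rewrite length_map, length_combine. auto. Qed.


Definition zrange (l : nat) (a : Z) : list Z :=
  map (fun k => (a + Z.of_nat k - Z.of_nat l)%Z) (seq 0 (2 * l + 1)).

Fixpoint cubelist (l : nat) (q : list Z) : list (list Z) :=
  match q with
  | [] => [[]]
  | a :: q' => flat_map (fun b => map (cons b) (cubelist l q')) (zrange l a)
  end.

Lemma in_zrange : forall l a b, In b (zrange l a) <-> (Z.abs (b - a) <= Z.of_nat l)%Z.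
Proof. intros. unfold zrange. rewrite in_map_iff. split.
  - intros [k [<- Hk]]. apply in_seq in Hk. lia.
  - intros H. exists (Z.to_nat (b - a + Z.of_nat l)). split; [lia|]. apply in_seq. lia. Qed.

Lemma NoDup_zrange : forall l a, NoDup (zrange l a).
Proof. intros. unfold zrange. apply FinFun.Injective_map_NoDup; [|apply seq_NoDup].
  intros x y H. lia. Qed.

Lemma in_cubelist : forall l q x, In x (cubelist l q) <->
  length x = length q /\ (normInf (vsub x q) <= Z.of_nat l)%Z.
Proof. induction q as [|a q IH]; intros x.
  - simpl. split.
    + intros [<-|[]]. simpl. lia.
    + intros [H _]. destruct x; simpl in H; try lia. auto.
  - simpl cubelist. rewrite in_flat_map. split.
    + intros [b [Hb Hx]]. apply in_map_iff in Hx. destruct Hx as [x' [<- Hx']].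
      apply IH in Hx'. apply in_zrange in Hb. rewrite vsub_cons. cbn [normInf fold_right length].
      fold (normInf (vsub x' q)). lia.
    + destruct x as [|b x']; cbn [length]; intros [H1 H2]; try lia.
      rewrite vsub_cons in H2. cbn [normInf fold_right] in H2. fold (normInf (vsub x' q)) in H2.
      exists b. split. apply in_zrange. lia. apply in_map. apply IH. lia. Qed.

Lemma NoDup_cubelist : forall l q, NoDup (cubelist l q).
Proof. induction q as [|a q IH].
  - simpl. constructor; auto. constructor.
  - simpl. generalize (NoDup_zrange l a). induction (zrange l a) as [|b r IHr]; intros Hr.
    + constructor.
    + simpl. inversion Hr; subst. apply NoDup_app.
      * apply FinFun.Injective_map_NoDup; auto. intros x y H; congruence.
      * apply IHr; auto.
      * intros x Hx Hx'. apply in_map_iff in Hx. destruct Hx as [x0 [<- _]].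
        apply in_flat_map in Hx'. destruct Hx' as [b' [Hb' Hx']]. apply in_map_iff in Hx'.
        destruct Hx' as [x1 [E _]]. inversion E; subst. auto. Qed.

Lemma length_cubelist : forall l q, length (cubelist l q) = ((2 * l + 1) ^ length q)%nat.
Proof. induction q as [|a q IH]; [reflexivity|]. cbn [cubelist length].
  assert (forall r, length (flat_map (fun b => map (cons b) (cubelist l q)) r) = (length r * (2*l+1)^length q)%nat).
  { induction r; simpl; auto. rewrite length_app, length_map, IHr, IH. cbn [length]. replace (l + (l+0) + 1)%nat with (2*l+1)%nat by lia. lia. }
  rewrite H. unfold zrange. rewrite length_map, length_seq. rewrite Nat.pow_succ_r'. lia. Qed.

Definition phi (G : Z -> R) (q x : list Z) := lsum (map G (vsub x q)).
Definition Sg (G : Z -> R) (l : nat) := lsum (map (fun k => G (Z.of_nat k - Z.of_nat l)%Z) (seq 0 (2 * l + 1))).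

Lemma cube_phi_sum : forall (G : Z -> R) l q,
  INR (2 * l + 1) * lsum (map (phi G q) (cubelist l q)) =
  INR (length q) * INR (2 * l + 1) ^ length q * Sg G l.
Proof. intros G l. induction q as [|a q IH].
  - simpl. unfold phi. simpl. lra.
  - simpl cubelist. rewrite lsum_flat_map.
    rewrite (lsum_ext _ (fun b => INR (length (cubelist l q)) * G (b - a)%Z + lsum (map (phi G q) (cubelist l q)))).
    2:{ intros b _. rewrite map_map. unfold phi at 1. 
        rewrite (lsum_ext _ (fun x => G (b - a)%Z + phi G q x)).
        2:{ intros x _. rewrite vsub_cons. reflexivity. }
        rewrite lsum_plus, lsum_const. lra. }
    rewrite lsum_plus, lsum_scal, lsum_const.
    assert (E : lsum (map (fun b => G (b - a)%Z) (zrange l a)) = Sg G l).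
    { unfold zrange, Sg. rewrite map_map. apply lsum_ext. intros. f_equal. lia. }
    rewrite E. unfold zrange. rewrite length_map, length_seq, length_cubelist, pow_INR.
    cbn [length]. rewrite S_INR. cbn [pow].
    set (X := INR (2*l+1)) in *. set (Sm := lsum (map (phi G q) (cubelist l q))) in *.
    replace (X * (X ^ length q * Sg G l + Sm * X)) with (X * X ^ length q * Sg G l + X * (X * Sm)) by ring.
    rewrite IH. ring. Qed.


Definition sigp (sig : nat -> R) (m : nat) := Rmax 0 (sig m).
Definition gfun (sig : nat -> R) (l k : nat) := sigp sig (Nat.min (l + 1 - k) l).
Definition Gz (sig : nat -> R) (l : nat) (z : Z) := gfun sig l (Z.to_nat (Z.abs z)).

Lemma gfun_nonneg : forall sig l k, 0 <= gfun sig l k.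
Proof. intros. unfold gfun, sigp. apply Rmax_l. Qed.

Lemma Sg_bound : forall sig l, (1 <= l)%nat ->
  (forall m, (1 <= m <= l)%nat -> 0 <= sig m) ->
  Sg (Gz sig l) l <= 4 * lsum (map sig (seq 1 l)).
Proof. intros sig l Hl Hs. unfold Sg.
  replace (2 * l + 1)%nat with (l + (l + 1))%nat by lia. rewrite seq_app, map_app, lsum_app.
  rewrite (lsum_ext _ (fun k => gfun sig l (l - k)%nat) (seq 0 l)).
  2:{ intros k Hk. apply in_seq in Hk. unfold Gz. f_equal. lia. }
  rewrite sum_seq_rev. rewrite (sum_seq_shift (l+1)).
  rewrite (lsum_ext (fun k : nat => Gz sig l (Z.of_nat (0 + l + k) - Z.of_nat l)) (gfun sig l) (seq 0 (l+1))).
  2:{ intros k Hk. unfold Gz. f_equal. lia. }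
  set (T := lsum (map sig (seq 1 l))).
  assert (HT : lsum (map (fun k => gfun sig l (k + 1)%nat) (seq 0 l)) = T).
  { rewrite (lsum_ext _ (fun k => sigp sig (l - k)%nat)).
    2:{ intros k Hk. apply in_seq in Hk. unfold gfun. f_equal. lia. }
    rewrite sum_seq_rev. unfold T. rewrite (sum_seq_shift l sig 1%nat).
    apply lsum_ext. intros k Hk. apply in_seq in Hk. unfold sigp.
    replace (k+1)%nat with (1+k)%nat by lia. apply Rmax_right. apply Hs. lia. }
  assert (HU : lsum (map (gfun sig l) (seq 0 (l + 1))) = gfun sig l 0 + T).
  { replace (l+1)%nat with (S l) by lia. simpl seq. cbn [map lsum fold_right].
    rewrite sum_seq_shift. rewrite <- HT. unfold lsum at 1. fold lsum. f_equal.
    apply lsum_ext. intros. f_equal. lia. }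
  assert (H0 : gfun sig l 0 <= T).
  { unfold gfun, T. replace (Nat.min (l+1-0) l) with l by lia. unfold sigp.
    rewrite Rmax_right by (apply Hs; lia).
    apply (lsum_In sig (seq 1 l) l). intros x Hx; apply in_seq in Hx; apply Hs; lia.
    apply in_seq. lia. }
  pose proof (gfun_nonneg sig l 0). lra. Qed.


Definition eqlb (a b : list Z) : bool := if list_eq_dec Z.eq_dec a b then true else false.

Lemma single_sum : forall c a Ql, NoDup Ql -> In a Ql ->
  lsum (map (fun i => if eqlb a i then c else 0) Ql) = c.
Proof. induction Ql as [|i Ql IH]; intros Hn Ha; [destruct Ha|].
  inversion Hn; subst. simpl. unfold eqlb at 1. destruct (list_eq_dec Z.eq_dec a i).
  - subst. rewrite (lsum_ext _ (fun _ => 0)). rewrite lsum_const. lra.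
    intros x Hx. unfold eqlb. destruct (list_eq_dec Z.eq_dec i x); auto. subst; contradiction.
  - destruct Ha as [->|Ha]; [congruence|]. rewrite IH; auto. lra. Qed.

Lemma group_sum : forall (f : list Z * list Z -> R) Ql L, NoDup Ql ->
  (forall p, In p L -> In (fst p) Ql) ->
  lsum (map f L) = lsum (map (fun i => lsum (map f (filter (fun p => eqlb (fst p) i) L))) Ql).
Proof. intros f Ql L Hn. induction L as [|p L IH]; intros HL.
  - simpl. rewrite lsum_const. lra.
  - rewrite (lsum_ext _ (fun i => (if eqlb (fst p) i then f p else 0) +
        lsum (map f (filter (fun p => eqlb (fst p) i) L)))).
    2:{ intros i _. simpl. destruct (eqlb (fst p) i); simpl; lra. }
    rewrite lsum_plus, single_sum; auto. rewrite <- IH. simpl. auto.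
    intros; apply HL; simpl; auto. apply HL; simpl; auto. Qed.

Lemma group_bound : forall (f : list Z * list Z -> R) (Gb : list Z -> R) Ql L,
  NoDup Ql -> NoDup L -> (forall p, In p L -> In (fst p) Ql) ->
  (forall i M, In i Ql -> NoDup M -> (forall p, In p M -> In p L /\ fst p = i) ->
     lsum (map f M) <= Gb i) ->
  lsum (map f L) <= lsum (map Gb Ql).
Proof. intros. rewrite (group_sum f Ql L); auto. apply lsum_le. intros i Hi.
  apply H2; auto. apply NoDup_filter; auto. intros p Hp. apply filter_In in Hp.
  destruct Hp as [Hp E]. split; auto. unfold eqlb in E. destruct (list_eq_dec Z.eq_dec (fst p) i); auto; discriminate. Qed.

Lemma NoDup_snd : forall (M : list (list Z * list Z)) i, NoDup M -> (forall p, In p M -> fst p = i) ->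
  NoDup (map snd M).
Proof. induction M as [|p M IH]; intros i Hn Hf; simpl; constructor.
  - intros Hin. apply in_map_iff in Hin. destruct Hin as [p' [E Hp']]. inversion Hn; subst.
    assert (p' = p). { pose proof (Hf p' (or_intror Hp')). pose proof (Hf p (or_introl eq_refl)).
      destruct p, p'. simpl in *. subst. auto. }
    subst; contradiction.
  - inversion Hn; subst. apply (IH i); auto. intros; apply Hf; right; auto. Qed.

Lemma lsum_unique : forall {T} (P : T -> Prop) f a b, finsum P f a -> finsum P f b -> a = b.
Proof. intros T P f a b [l1 [N1 [I1 ->]]] [l2 [N2 [I2 ->]]]. apply lsum_perm.
  apply Permutation_map. apply NoDup_Permutation; auto. intros x. rewrite I1, I2. tauto. Qed.


Definition cubeb d l q i : bool :=
  Nat.eqb (length i) d && Z.leb (normInf (vsub i q)) (Z.of_nat l).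

Lemma cubeb_spec : forall d l q i, cubeb d l q i = true <-> cube d l q i.
Proof. intros. unfold cubeb, cube, site. rewrite Bool.andb_true_iff, Nat.eqb_eq, Z.leb_le. tauto. Qed.

Lemma in_Ql : forall d l q i, site d q -> (In i (cubelist l q) <-> cube d l q i).
Proof. intros d l q i Hq. rewrite in_cubelist. unfold cube, site in *. rewrite Hq. tauto. Qed.

Lemma has_nnsum_exists : forall d (Lambda : R) J i (P : list Z -> Prop),
  J4 d Lambda J -> site d i -> (forall j, P j -> site d j) ->
  exists x, has_nnsum P (J i) x.
Proof. intros d Lambda J i P H4 Hi HP.
  destruct (completeness (fun s => exists l0, NoDup l0 /\ Forall P l0 /\ s = lsum (map (J i) l0))) as [x Hx].
  - exists Lambda. intros s [l0 [N [F ->]]]. apply H4; auto. eapply Forall_impl; [|exact F]. auto.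
  - exists 0. exists []. repeat split; auto. constructor.
  - exists x. exact Hx. Qed.

Lemma sig_nonneg : forall d Lambda J m s, J4 d Lambda J -> sigma_val d J m s -> 0 <= s.
Proof. intros d Lambda J m s H4 Hs.
  assert (Hi : site d (repeat 0%Z d)) by (unfold site; apply repeat_length).
  destruct (has_nnsum_exists d Lambda J (repeat 0%Z d)
     (fun j => site d j /\ (Z.of_nat m <= normInf (vsub j (repeat 0%Z d)))%Z) H4 Hi) as [x Hx].
  { intros j [Hj _]; auto. }
  assert (0 <= x). { apply Hx. exists []. repeat split; auto. constructor. }
  assert (x <= s). { apply Hs. exists (repeat 0%Z d). split; auto. }
  lra. Qed.

Lemma row_bound : forall d Lambda J (sig : nat -> R) l q i js,
  J4 d Lambda J -> site d q -> (1 <= l)%nat ->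
  (forall m, (1 <= m <= l)%nat -> sigma_val d J m (sig m)) ->
  cube d l q i -> NoDup js -> Forall (fun j => site d j /\ ~ cube d l q j) js ->
  lsum (map (J i) js) <= gfun sig l (Z.to_nat (normInf (vsub i q))).
Proof. intros d Lambda J sig l q i js H4 Hq Hl Hsig Hi Hn Hf.
  pose proof (normInf_nonneg (vsub i q)) as Hk0.
  destruct Hi as [Hsi Hiq].
  set (k := Z.to_nat (normInf (vsub i q))).
  set (m := Nat.min (l + 1 - k) l).
  assert (Hm : (1 <= m <= l)%nat) by (unfold m, k; lia).
  destruct (has_nnsum_exists d Lambda J i (fun j => site d j /\ (Z.of_nat m <= normInf (vsub j i))%Z) H4 Hsi) as [x Hx].
  { intros j [Hj _]; auto. }
  assert (lsum (map (J i) js) <= x).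
  { apply Hx. exists js. repeat split; auto. eapply Forall_impl; [|exact Hf].
    intros j [Hj Hnc]. split; auto.
    assert (normInf (vsub j q) > Z.of_nat l)%Z.
    { destruct (Z_le_gt_dec (normInf (vsub j q)) (Z.of_nat l)); auto. exfalso; apply Hnc; split; auto. }
    unfold site in *.
    pose proof (normInf_tri j i q ltac:(congruence) ltac:(congruence)).
    unfold m, k. lia. }
  assert (x <= sig m). { apply (Hsig m Hm). exists i. split; auto. }
  unfold gfun. fold k. fold m. unfold sigp. pose proof (Rmax_r 0 (sig m)). lra. Qed.

Definition Jf (J : list Z -> list Z -> R) (p : list Z * list Z) := J (fst p) (snd p).

Lemma pairs_bound : forall d Lambda J (sig : nat -> R) l q M,
  J4 d Lambda J -> site d q -> (1 <= l)%nat ->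
  (forall m, (1 <= m <= l)%nat -> sigma_val d J m (sig m)) ->
  NoDup M -> Forall (fun p => cube d l q (fst p) /\ site d (snd p) /\ ~ cube d l q (snd p)) M ->
  lsum (map (Jf J) M) <= lsum (map (fun i => gfun sig l (Z.to_nat (normInf (vsub i q)))) (cubelist l q)).
Proof. intros d Lambda J sig l q M H4 Hq Hl Hsig Hn Hf. rewrite Forall_forall in Hf.
  apply group_bound; auto. apply NoDup_cubelist.
  - intros p Hp. apply (proj2 (in_Ql d l q _ Hq)). apply Hf; auto.
  - intros i M' Hi HM' HM.
    rewrite (lsum_ext _ (fun p => J i (snd p))).
    2:{ intros p Hp. unfold Jf. rewrite (proj2 (HM p Hp)). auto. }
    rewrite <- (map_map snd (J i)). apply (row_bound d Lambda); auto.
    + apply (proj1 (in_Ql d l q _ Hq)); auto.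
    + apply (NoDup_snd M' i); auto. intros p Hp; apply HM; auto.
    + rewrite Forall_forall. intros j Hj. apply in_map_iff in Hj. destruct Hj as [p [<- Hp]].
      destruct (HM p Hp) as [Hp' _]. destruct (Hf p Hp') as [_ [A B]]. auto. Qed.


Definition swp (p : list Z * list Z) := (snd p, fst p).

Lemma core : forall d Lambda J h (sig : nat -> R) l q u Lu,
  J_nonneg d J -> J1 d J -> J4 d Lambda J -> site d q -> (1 <= l)%nat ->
  minimizer d J h (cube d l q) u ->
  (forall m, (1 <= m <= l)%nat -> sigma_val d J m (sig m)) ->
  Hval d J h (cube d l q) u Lu ->
  Lu <= 4 * lsum (map (fun i => gfun sig l (Z.to_nat (normInf (vsub i q)))) (cubelist l q)).
Proof. intros d Lambda J h sig l q u Lu Jnn HJ1 H4 Hq Hl [Hcu [Lu0 [HLu0 Hmin]]] Hsig HLu.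
  assert (Lu = Lu0).
  { destruct HLu as [A [B [HA [HB ->]]]]. destruct HLu0 as [A0 [B0 [HA0 [HB0 ->]]]].
    rewrite (is_lub_u _ _ _ HA HA0), (lsum_unique _ _ _ _ HB HB0). auto. }
  subst Lu0.
  set (Ql := cubelist l q).
  set (X := lsum (map (fun i => gfun sig l (Z.to_nat (normInf (vsub i q)))) Ql)).
  set (hs := lsum (map h Ql)).
  set (s := if Rle_dec hs 0 then 1 else -1).
  assert (Hs : s * s = 1 /\ s * hs <= 0).
  { unfold s. destruct (Rle_dec hs 0); split; lra. }
  set (v := fun i => if cubeb d l q i then s else u i).
  assert (Hv1 : forall i, site d i -> v i = 1 \/ v i = -1).
  { intros i Hi. unfold v. destruct (cubeb d l q i); auto. unfold s; destruct Rle_dec; auto. }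
  set (Pp := fun p : list Z * list Z => site d (fst p) /\ site d (snd p) /\ (cube d l q (fst p) \/ cube d l q (snd p))).
  set (Fv := fun p : list Z * list Z => J (fst p) (snd p) * (1 - v (fst p) * v (snd p))).
  assert (Hpart : forall Lp, NoDup Lp -> Forall Pp Lp -> lsum (map Fv Lp) <= 2 * X + 2 * X).
  { intros Lp Hn Hf.
    set (L1 := filter (fun p => cubeb d l q (fst p) && negb (cubeb d l q (snd p))) Lp).
    set (L2 := filter (fun p => negb (cubeb d l q (fst p)) && cubeb d l q (snd p)) Lp).
    assert (S1 : lsum (map Fv Lp) <= 2 * lsum (map (Jf J) L1) + 2 * lsum (map (Jf J) (map swp L2))).
    { unfold L1, L2. clear Hn. rewrite map_map. induction Lp as [|p Lp IH]; [simpl; lra|].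
      inversion Hf as [|? ? Hp Hf']; subst. specialize (IH Hf').
      destruct Hp as [Ha [Hb Hab]].
      assert (Jp : 0 <= J (fst p) (snd p)) by (apply Jnn; auto).
      simpl. unfold Jf, swp in *. cbv zeta in IH. cbn [fst snd] in *. unfold Fv at 1, v at 1 2.
      destruct (cubeb d l q (fst p)) eqn:E1; destruct (cubeb d l q (snd p)) eqn:E2; simpl.
      - destruct Hs as [Hs1 _]. rewrite Hs1. lra.
      - destruct (Hcu _ Hb) as [-> | ->]; unfold s; destruct Rle_dec; nra.
      - rewrite (HJ1 (snd p) (fst p)) by auto.
        destruct (Hcu _ Ha) as [-> | ->]; unfold s; destruct Rle_dec; nra.
      - exfalso. destruct Hab as [Hc|Hc]; apply cubeb_spec in Hc; congruence. }
    assert (S2 : lsum (map (Jf J) L1) <= X).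
    { apply (pairs_bound d Lambda J sig l q); auto. unfold L1; apply NoDup_filter; auto.
      rewrite Forall_forall in *. intros p Hp. unfold L1 in Hp. apply filter_In in Hp.
      destruct Hp as [Hp E]. apply Bool.andb_true_iff in E. destruct E as [E1 E2].
      destruct (Hf p Hp) as [_ [Hb _]]. split; [apply cubeb_spec; auto|]. split; auto.
      intros Hc. apply cubeb_spec in Hc. rewrite Hc in E2. discriminate. }
    assert (S3 : lsum (map (Jf J) (map swp L2)) <= X).
    { apply (pairs_bound d Lambda J sig l q); auto.
      - apply FinFun.Injective_map_NoDup. intros [a b] [c e] E; unfold swp in E; simpl in E; congruence.
        unfold L2; apply NoDup_filter; auto.
      - rewrite Forall_forall in *. intros p' Hp'. apply in_map_iff in Hp'. destruct Hp' as [p [<- Hp]].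
        unfold L2 in Hp. apply filter_In in Hp.
        destruct Hp as [Hp E]. apply Bool.andb_true_iff in E. destruct E as [E1 E2].
        destruct (Hf p Hp) as [Ha _]. unfold swp; simpl. split; [apply cubeb_spec; auto|]. split; auto.
        intros Hc. apply cubeb_spec in Hc. rewrite Hc in E1. discriminate. }
    lra. }
  destruct (completeness (fun x => exists Lp, NoDup Lp /\ Forall Pp Lp /\ x = lsum (map Fv Lp))) as [Av HAv].
  { exists (2 * X + 2 * X). intros x [Lp [N [F ->]]]. apply Hpart; auto. }
  { exists 0. exists []. repeat split; auto. constructor. }
  set (Bv := lsum (map (fun i => h i * v i) Ql)).
  assert (HBv : Bv = s * hs).
  { unfold Bv, hs. rewrite <- lsum_scal. apply lsum_ext. intros i Hi.
    unfold v. replace (cubeb d l q i) with true. ring.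
    symmetry. apply cubeb_spec. apply in_Ql; auto. }
  assert (Lu <= Av + Bv).
  { apply (Hmin v).
    - intros i Hi. apply Hv1; auto.
    - intros i Hi Hnc. unfold v. destruct (cubeb d l q i) eqn:E; auto.
      apply cubeb_spec in E; contradiction.
    - exists Av, Bv. split; [exact HAv|]. split; auto.
      exists Ql. split; [apply NoDup_cubelist|]. split; auto.
      intros x. unfold Ql. rewrite (in_Ql d l q x Hq). unfold cube. tauto. }
  assert (Av <= 2 * X + 2 * X).
  { apply HAv. intros x [Lp [N [F ->]]]. apply Hpart; auto. }
  fold Ql. fold X. lra. Qed.


Lemma X_bound : forall d Lambda J (sig : nat -> R) l q,
  (1 <= d)%nat -> J4 d Lambda J -> site d q -> (1 <= l)%nat ->
  (forall m, (1 <= m <= l)%nat -> sigma_val d J m (sig m)) ->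
  4 * lsum (map (fun i => gfun sig l (Z.to_nat (normInf (vsub i q)))) (cubelist l q))
  <= rhs (16 * INR d * 3 ^ (d - 1)) d l sig.
Proof. intros d Lambda J sig l q Hd H4 Hq Hl Hsig.
  assert (Hs0 : forall m, (1 <= m <= l)%nat -> 0 <= sig m).
  { intros m Hm. apply (sig_nonneg d Lambda J m); auto. }
  set (T := lsum (map sig (seq 1 l))).
  assert (HT : 0 <= T). { apply lsum_nonneg. intros x Hx; apply in_seq in Hx; apply Hs0; lia. }
  assert (HX : lsum (map (fun i => gfun sig l (Z.to_nat (normInf (vsub i q)))) (cubelist l q))
               <= lsum (map (phi (Gz sig l) q) (cubelist l q))).
  { apply lsum_le. intros i Hi. apply in_cubelist in Hi. destruct Hi as [Hi _].
    destruct (normInf_attained (vsub i q)) as [z [Hz Ez]].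
    { intros E. assert (length (vsub i q) = 0%nat) by (rewrite E; auto).
      rewrite vsub_length in H. unfold site in Hq. lia. }
    rewrite <- Ez. unfold phi. apply (lsum_In (Gz sig l) (vsub i q) z); auto.
    intros; apply gfun_nonneg. }
  pose proof (cube_phi_sum (Gz sig l) l q) as HC.
  unfold site in Hq. rewrite Hq in HC.
  destruct d as [|d']; [lia|]. replace (S d' - 1)%nat with d' by lia.
  set (Y := INR (2 * l + 1)) in *.
  assert (HY : 0 < Y) by (unfold Y; apply lt_0_INR; lia).
  set (Sm := lsum (map (phi (Gz sig l) q) (cubelist l q))) in *.
  assert (E : Sm = INR (S d') * Y ^ d' * Sg (Gz sig l) l).
  { apply (Rmult_eq_reg_l Y); [|lra]. rewrite HC. simpl pow. ring. }
  pose proof (Sg_bound sig l Hl Hs0) as HS. fold T in HS.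
  assert (HSg0 : 0 <= Sg (Gz sig l) l).
  { apply lsum_nonneg. intros; apply gfun_nonneg. }
  assert (HYl : Y ^ d' <= 3 ^ d' * INR l ^ d').
  { rewrite <- Rpow_mult_distr. apply pow_incr. unfold Y. rewrite plus_INR, mult_INR.
    assert (1 <= INR l) by (apply (le_INR 1); lia). simpl. lra. }
  assert (Hp : 0 <= INR l ^ d') by (apply pow_le; apply pos_INR).
  assert (H3 : 0 <= 3 ^ d') by (apply pow_le; lra).
  assert (Hd0 : 0 <= INR (S d')) by apply pos_INR.
  unfold rhs. fold T.
  assert (Sm <= INR (S d') * (3 ^ d' * INR l ^ d') * (4 * T)).
  { rewrite E. apply Rmult_le_compat; auto. apply Rmult_le_pos; auto. apply pow_le; lra.
    apply Rmult_le_compat_l; auto. }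
  assert (INR (S d') * (3 ^ d' * INR l ^ d') * T <= INR (S d') * 3 ^ d' * INR l ^ d' * (1 + T)).
  { assert (0 <= INR (S d') * 3 ^ d' * INR l ^ d') by (repeat apply Rmult_le_pos; auto).
    nra. }
  replace (S d' - 1)%nat with d' by lia. lra. Qed.

Theorem mainTheorem8 :
  forall (d : nat), (2 <= d)%nat ->
  (forall (mu : R) (tau : nat), 0 < mu -> (1 <= tau)%nat ->
   exists C : R, 1 <= C /\
   forall (lambda Lambda : R) (J : list Z -> list Z -> R) (h : list Z -> R),
     0 < lambda -> lambda <= Lambda ->
     J_nonneg d J -> J1 d J -> J2 d J -> J3 d lambda J -> J4 d Lambda J ->
     h1 d mu h -> h2 d tau h ->
     forall (q : list Z) (l : nat) (u : list Z -> R) (sig : nat -> R),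
       site d q -> (1 <= l)%nat ->
       minimizer d J h (cube d l q) u ->
       (forall m, (1 <= m <= l)%nat -> sigma_val d J m (sig m)) ->
       forall Lu, Hval d J h (cube d l q) u Lu -> Lu <= rhs C d l sig)
  /\
  (exists C : R, 1 <= C /\
   forall (mu : R) (tau : nat) (lambda Lambda : R)
          (J : list Z -> list Z -> R) (h : list Z -> R),
     0 < mu -> (1 <= tau)%nat ->
     0 < lambda -> lambda <= Lambda ->
     J_nonneg d J -> J1 d J -> J2 d J -> J3 d lambda J -> J4 d Lambda J ->
     h1 d mu h -> h2 d tau h ->
     forall (q : list Z) (l : nat) (u : list Z -> R) (sig : nat -> R),
       site d q -> (1 <= l)%nat ->
       (forall i, cube d l q i -> h i = 0) ->
       minimizer d J h (cube d l q) u ->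
       (forall m, (1 <= m <= l)%nat -> sigma_val d J m (sig m)) ->
       forall Lu, Hval d J h (cube d l q) u Lu -> Lu <= rhs C d l sig).
Proof.
  intros d Hd.
  assert (HC : 1 <= 16 * INR d * 3 ^ (d - 1)).
  { assert (1 <= INR d) by (apply (le_INR 1); lia).
    assert (1 <= 3 ^ (d - 1)) by (apply pow_R1_Rle; lra).
    assert (0 <= INR d * 3 ^ (d-1)) by nra. nra. }
  split.
  - intros mu tau _ _. exists (16 * INR d * 3 ^ (d - 1)). split; auto.
    intros lambda Lambda J h _ _ Jnn HJ1 _ _ H4 _ _ q l u sig Hq Hl Hmin Hsig Lu HLu.
    eapply Rle_trans. apply (core d Lambda J h sig l q u Lu); eauto.
    apply (X_bound d Lambda J sig l q); auto. lia.
  - exists (16 * INR d * 3 ^ (d - 1)). split; auto.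
    intros mu tau lambda Lambda J h _ _ _ _ Jnn HJ1 _ _ H4 _ _ q l u sig Hq Hl _ Hmin Hsig Lu HLu.
    eapply Rle_trans. apply (core d Lambda J h sig l q u Lu); eauto.
    apply (X_bound d Lambda J sig l q); auto. lia.
Qed.
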